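(* Let $\mathbb{F}$ be a field, $d\geq3$ and $V$ a vector space over $\mathbb{F}$ of dimension $d+1$. Let $E^*_0,\dots,E^*_d$ be a system of mutually orthogonal idempotents in $\mathrm{End}(V)$ and $A\in\mathrm{End}(V)$ with $E^*_iAE^*_j=0$ if $|i-j|>1$ and $E^*_iAE^*_j\neq0$ if $|i-j|=1$, with $A$ multiplicity-free and bipartite. Let $\theta^*_0,\dots,\theta^*_d\in\mathbb{F}$ be mutually distinct and $A^*=\sum_i\theta^*_iE^*_i$. Fix an integer $i$ with $3\le i\le d$ and assume that $\dfrac{\theta^*_j-\theta^*_{j-3}}{\theta^*_{j-1}-\theta^*_{j-2}}$ is independent of $j$ for $3\le j\le i$ (equivalently, that $\dfrac{\theta^*_j+\theta^*_{j-1}+\theta^*_{j-2}-\theta^*_h-\theta^*_{h-1}-\theta^*_{h-2}}{\theta^*_{j-1}-\theta^*_{h-1}}$ is independent of $j,h$ for $2\le h<j\le i$). Then $$\frac{\theta^*_{i-2}-\theta^*_2}{\theta^*_{i-1}-\theta^*_1}=\frac{\theta^*_{i-1}-\theta^*_3}{\theta^*_i-\theta^*_2}.$$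
   Context: A system of mutually orthogonal idempotents: $E^*_iE^*_j=\delta_{ij}E^*_i$, $\operatorname{rank}E^*_i=1$. $A$ multiplicity-free: $d+1$ distinct eigenvalues in $\mathbb{F}$. Bipartite: $\operatorname{tr}(E^*_iA)=0$ for all $i$. *)

(* Defs.v *)
From HB Require Import structures.
From mathcomp Require Import all_boot all_order all_algebra.
Set Implicit Arguments. Unset Strict Implicit. Unset Printing Implicit Defensive.
Import Order.TTheory GRing.Theory Num.Theory.
Local Open Scope ring_scope.

(* End(V) for dim V = d+1 is modelled as 'M[F]_(d.+1); indices run over 0..d (nat). *)

Definition orth_idempotents (F : fieldType) (d : nat) (E : nat -> 'M[F]_(d.+1)) :=
  (forall i j, (i <= d)%N -> (j <= d)%N ->
     E i *m E j = if i == j then E i else 0) /\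
  (forall i, (i <= d)%N -> \rank (E i) = 1%N).

Definition multiplicity_free (F : fieldType) (d : nat) (A : 'M[F]_(d.+1)) :=
  exists th : 'I_(d.+1) -> F, injective th /\ forall k, eigenvalue A (th k).

Definition bipartite (F : fieldType) (d : nat) (E : nat -> 'M[F]_(d.+1))
  (A : 'M[F]_(d.+1)) := forall i, (i <= d)%N -> \tr (E i *m A) = 0.

Definition tridiag_wrt (F : fieldType) (d : nat) (E : nat -> 'M[F]_(d.+1))
  (A : 'M[F]_(d.+1)) :=
  (forall i j, (i <= d)%N -> (j <= d)%N -> (i.+1 < j)%N \/ (j.+1 < i)%N ->
     E i *m A *m E j = 0) /\
  (forall i j, (i <= d)%N -> (j <= d)%N -> (i.+1 == j) || (j.+1 == i) ->
     E i *m A *m E j != 0).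

Definition dual_op (F : fieldType) (d : nat) (th : nat -> F)
  (E : nat -> 'M[F]_(d.+1)) : 'M[F]_(d.+1) :=
  \sum_(0 <= k < d.+1) th k *: E k.

(* Main.v *)
Require Import Defs.
From HB Require Import structures.
From mathcomp Require Import all_boot all_order all_algebra.
From mathcomp Require Import zify ring.
Import Order.TTheory GRing.Theory Num.Theory.
Local Open Scope ring_scope.

Theorem lemma9p3 (F : fieldType) (d : nat) (E : nat -> 'M[F]_(d.+1))
  (A : 'M[F]_(d.+1)) (th : nat -> F) (i : nat) :
  (3 <= d)%N ->
  orth_idempotents E ->
  tridiag_wrt E A ->
  multiplicity_free A ->
  bipartite E A ->
  (forall j k, (j <= d)%N -> (k <= d)%N -> th j = th k -> j = k) ->
  let Astar := dual_op th E in
  (3 <= i <= d)%N ->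
  (exists beta : F, forall j, (3 <= j <= i)%N ->
     (th j - th (j - 3)%N) / (th (j - 1)%N - th (j - 2)%N) = beta) ->
  (th (i - 2)%N - th 2%N) / (th (i - 1)%N - th 1%N)
    = (th (i - 1)%N - th 3%N) / (th i - th 2%N).
Proof.
move=> _ _ _ _ _ inj _ /andP[hi3 hid] [b hb].
have ne : forall j k, (j <= d)%N -> (k <= d)%N -> j <> k -> th j - th k != 0.
  move=> j k hj hk hjk; rewrite subr_eq0; apply/eqP => h; exact: hjk (inj _ _ hj hk h).
have H : forall k, (k.+3 <= i)%N -> th k.+3 - th k = b * (th k.+2 - th k.+1).
  move=> k hk; have := hb k.+3.
  have e1 : (k.+3 - 3 = k)%N by lia.
  have e2 : (k.+3 - 1 = k.+2)%N by lia.
  have e3 : (k.+3 - 2 = k.+1)%N by lia.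
  rewrite e1 e2 e3 => h; rewrite -h; last by rewrite hk.
  rewrite divfK //; apply: ne; lia.
pose kap := th 2 + th 1 + th 0 - b * th 1.
have K : forall k, (k.+2 <= i)%N -> th k.+2 + th k.+1 + th k - b * th k.+1 = kap.
  elim=> [//|k IH hk].
  have h := H k hk.
  have -> : th k.+3 = th k + b * (th k.+2 - th k.+1) by rewrite -h; ring.
  rewrite -(IH (ltnW hk)); ring.
have R : forall k, (k.+2 <= i)%N -> th k.+2 = (b - 1) * th k.+1 + kap - th k.
  move=> k hk; rewrite -(K k hk); ring.
pose I n := th n.+2 * th n - th n.+1 ^+ 2 + kap * th n.+1.
have HI : forall n, (n.+2 <= i)%N -> I n = I 0%N.
  elim=> [//|n IH hn]; rewrite -(IH (ltnW hn)) /I.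
  rewrite (R n.+1 hn) (R n (ltnW hn)); ring.
case: i hi3 hid hb H K R HI => [|[|[|m]]] // _ hmd hb H K R HI.
rewrite (_ : (m.+3 - 2 = m.+1)%N) // (_ : (m.+3 - 1 = m.+2)%N) //.
apply/eqP; rewrite eqr_div; last 2 first.
- apply: ne; lia.
- apply: ne; lia.
have hh : (th m.+1 - th 2) * (th m.+3 - th 2) - (th m.+2 - th 3) * (th m.+2 - th 1)
   = I m.+1 - I 1%N.
  rewrite /I (R m.+1 (leqnn _)) (R 1%N (ltac:(lia))); ring.
rewrite -subr_eq0 hh (HI m.+1 (leqnn _)) (HI 1%N ltac:(lia)) subrr //.
Qed.
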